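(* Let $\mathcal{S}\in\mathscr{W}$ be $C^3$-smooth with an isolated umbilic point at $\theta=0$, and let $\alpha\in\mathbb{R}$. Then (1) if $\mu_0>\alpha+1$, then $\lim_{\theta\to0}\frac{s(\theta)}{\sin^\alpha\theta}=0$; (2) if $\mu_0<\alpha+1$, then $\lim_{\theta\to0}\frac{s(\theta)}{\sin^\alpha\theta}=\pm\infty$. If $\mathcal{S}$ has an isolated umbilic point at $\theta=\pi$, then the value of $\mu_\pi$ dictates the behaviour of $s/\sin^\alpha\theta$ as $\theta\to\pi$ in the same way.
   Context: $\mathscr{W}$ is the set of embedded $C^2$-smooth topological 2-spheres in $\mathbb{R}^3$ that are rotationally symmetric and strictly convex. A surface in $\mathscr{W}$ is parametrised by the inverse Gauss map with $\theta\in[0,\pi]$ the angle between the outward normal and the symmetry axis ($\theta=0,\pi$ are the poles). With support function $r(\theta)=\vec X\cdot\hat n$, the radii of curvature are $r_1=\frac{\cos^2\theta}{\sin\theta}\frac{d}{d\theta}\left(\frac{r}{\cos\theta}\right)$, $r_2=r''+r$, and the astigmatism is $s=r_2-r_1$; umbilic points are where $s=0$. The umbilic slopes are $\mu_0=\lim_{\theta\to0}\frac{r_2(\theta)-r_2(0)}{r_1(\theta)-r_1(0)}$ and $\mu_\pi=\lim_{\theta\to\pi}\frac{r_2(\theta)-r_2(\pi)}{r_1(\theta)-r_1(\pi)}$. *)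

(* Defs.v *)
From Stdlib Require Import Reals.
From Coquelicot Require Import Coquelicot.
Open Scope R_scope.

(* A surface S in W is described (via the inverse Gauss map) by its support
   function r(theta), theta = angle between outward normal and the axis.
   We regard r as the restriction of the (rotationally symmetric) support
   function of S on S^2 to a meridian great circle, i.e. as a function on R
   which is even and 2*pi-periodic. *)

Definition C3 (r : R -> R) : Prop :=
  (forall t, ex_derive_n r 1 t) /\
  (forall t, ex_derive_n r 2 t) /\
  (forall t, ex_derive_n r 3 t) /\
  (forall t, continuous (Derive_n r 3) t).

(* radii of curvature:  r1 = cos^2/sin * d/dtheta (r / cos) = r + r' cos / sin,
   r2 = r'' + r;  astigmatism s = r2 - r1 (for 0 < theta < pi) *)
Definition r1 (r : R -> R) (t : R) : R := r t + Derive r t * cos t / sin t.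
Definition r2 (r : R -> R) (t : R) : R := Derive_n r 2 t + r t.
Definition astig (r : R -> R) (t : R) : R := r2 r t - r1 r t.

(* r is the support function of a C^3-smooth surface in W:
   C^3, rotationally symmetric (even, 2pi-periodic along the meridian),
   strictly convex (both radii of curvature positive, at the poles
   r1 = r2 = r'' + r). *)
Definition support_fun_W_C3 (r : R -> R) : Prop :=
  C3 r /\
  (forall t, r (- t) = r t) /\
  (forall t, r (t + 2 * PI) = r t) /\
  (forall t, 0 < t < PI -> 0 < r1 r t) /\
  (forall t, 0 <= t <= PI -> 0 < r2 r t).

(* isolated umbilic at the poles (the poles are always umbilic) *)
Definition isolated_umbilic_0 (r : R -> R) : Prop :=
  exists eps, 0 < eps /\ forall t, 0 < t < eps -> astig r t <> 0.
Definition isolated_umbilic_pi (r : R -> R) : Prop :=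
  exists eps, 0 < eps /\ forall t, PI - eps < t < PI -> astig r t <> 0.

(* mu is the umbilic slope mu_0 (resp. mu_pi); r1(0), r1(pi) are the
   limiting values of r1 at the poles *)
Definition umbilic_slope_0 (r : R -> R) (mu : R) : Prop :=
  exists r10, filterlim (r1 r) (at_right 0) (locally r10) /\
    filterlim (fun t => (r2 r t - r2 r 0) / (r1 r t - r10))
      (at_right 0) (locally mu).
Definition umbilic_slope_pi (r : R -> R) (mu : R) : Prop :=
  exists r1pi, filterlim (r1 r) (at_left PI) (locally r1pi) /\
    filterlim (fun t => (r2 r t - r2 r PI) / (r1 r t - r1pi))
      (at_left PI) (locally mu).

(* Main.v *)
Require Import Defs.
From Stdlib Require Import Reals Lra Lia.
From Coquelicot Require Import Coquelicot.
Open Scope R_scope.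

Lemma C3_d r : C3 r -> forall t, is_derive r t (Derive r t) /\ is_derive (Derive r) t (Derive_n r 2 t) /\ is_derive (Derive_n r 2) t (Derive_n r 3 t).
Proof.
intros [H1 [H2 [H3 _]]] t. split; [|split].
- exact (Derive_correct _ _ (H1 t)).
- exact (Derive_correct _ _ (H2 t)).
- exact (Derive_correct _ _ (H3 t)).
Qed.

Lemma astig_eq r t : astig r t = Derive_n r 2 t - Derive r t * cos t / sin t.
Proof. unfold astig, r2, r1. ring. Qed.

Lemma deriv_r1 r t : C3 r -> sin t <> 0 -> is_derive (r1 r) t (astig r t * cos t / sin t).
Proof.
intros HC Hs. destruct (C3_d r HC t) as [D1 [D2 _]].
unfold r1. auto_derive.
- repeat split; auto. eexists; exact D1. eexists; exact D2.
- change (Derive (fun x => r x) t) with (Derive r t).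
  change (Derive (fun x : R => Derive r x) t) with (Derive_n r 2 t).
  rewrite astig_eq. field. auto.
Qed.

Lemma ball_R (x e y : R) : ball x e y <-> Rabs (y - x) < e.
Proof. reflexivity. Qed.

Lemma ar_intro (P : R -> Prop) d : 0 < d -> (forall u, 0 < u < d -> P u) -> at_right 0 P.
Proof.
intros Hd H. exists (mkposreal d Hd). intros y Hy Hp. apply H.
apply ball_R in Hy. change (Rabs (y - 0) < d) in Hy. rewrite Rminus_0_r in Hy. apply Rabs_def2 in Hy. lra.
Qed.

Lemma ar_elim (P : R -> Prop) : at_right 0 P -> exists d, 0 < d /\ forall u, 0 < u < d -> P u.
Proof.
intros [e He]. exists (pos e). split. apply cond_pos. intros u Hu. apply He. 2: lra.
apply ball_R. rewrite Rminus_0_r, Rabs_pos_eq; lra.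
Qed.

Lemma lim_elim f l : filterlim f (at_right 0) (locally l) -> forall eps, 0 < eps ->
  exists d, 0 < d /\ forall u, 0 < u < d -> Rabs (f u - l) < eps.
Proof.
intros H eps He. apply (proj1 (filterlim_locally _ _)) with (eps := mkposreal eps He) in H.
apply ar_elim in H. destruct H as [d [Hd H]]. exists d. split; [exact Hd|]. intros u Hu. exact (H u Hu).
Qed.

Lemma lim_intro f l : (forall eps, 0 < eps -> exists d, 0 < d /\ forall u, 0 < u < d -> Rabs (f u - l) < eps) ->
  filterlim f (at_right 0) (locally l).
Proof.
intros H. apply filterlim_locally. intros [e He]. destruct (H e He) as [d [Hd Hu]].
apply (ar_intro _ d Hd). intros u Hu'. apply ball_R. simpl. auto.
Qed.

Lemma pinf_intro f : (forall M, exists d, 0 < d /\ forall u, 0 < u < d -> M < f u) ->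
  filterlim f (at_right 0) (Rbar_locally p_infty).
Proof.
intros H P [M HM]. destruct (H M) as [d [Hd Hu]]. apply (ar_intro _ d Hd). intros u Hu'. apply HM. auto.
Qed.

Lemma minf_intro f : (forall M, exists d, 0 < d /\ forall u, 0 < u < d -> f u < M) ->
  filterlim f (at_right 0) (Rbar_locally m_infty).
Proof.
intros H P [M HM]. destruct (H M) as [d [Hd Hu]]. apply (ar_intro _ d Hd). intros u Hu'. apply HM. auto.
Qed.

Lemma cos_lb1 t : 0 <= t <= 1 -> 1 - t^2/2 <= cos t.
Proof.
intros Ht. assert (H := cos_bound t 0). 
assert (HP := PI2_1).
destruct H as [H _]; try lra.
unfold cos_approx, cos_term in H. simpl in H. lra.
Qed.

Lemma isd_cont (f : R -> R) (x l : R) : is_derive f x l -> continuity_pt f x.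
Proof.
intros H. apply continuity_pt_filterlim. apply (ex_derive_continuous (K:=R_AbsRing) (V:=R_NormedModule)). exists l. exact H.
Qed.

Lemma trig1 t : 0 < t <= 1 -> t/2 <= sin t /\ sin t <= t /\ 0 <= cos t <= 1 /\
   0 <= sin t - t * cos t <= t^3.
Proof.
intros Ht. assert (HP := PI2_1).
assert (Hc1 := cos_lb1 t ltac:(lra)).
assert (Hs : sin t < t) by (apply sin_lt_x; lra).
assert (Hc : 0 <= cos t <= 1) by (split; [apply cos_ge_0; lra | apply COS_bound]).
assert (Hm : 0 <= sin t - t * cos t <= t^3).
{ destruct (MVT_gen (fun u => sin u - u * cos u) 0 t (fun u => u * sin u)) as [c [Hc' Heq]].
  - intros x _. auto_derive; auto. ring.
  - intros x _. apply (isd_cont _ _ (x * sin x)). auto_derive; auto. ring.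
  - rewrite Rmin_left, Rmax_right in Hc' by lra. simpl in Heq. rewrite sin_0, Rmult_0_l, Rminus_0_r, Rminus_0_r in Heq.
    assert (0 <= sin c) by (apply sin_ge_0; lra).
    assert (sin c <= c) by (destruct (Req_dec c 0) as [->|]; [rewrite sin_0; lra| left; apply sin_lt_x; lra]).
    rewrite Heq. split. apply Rmult_le_pos; [apply Rmult_le_pos|]; lra.
    simpl. assert (c * sin c <= t * t) by nra. nra. }
split; [|split; [lra|split; [lra|lra]]]. nra.
Qed.

Lemma even_d0 r : C3 r -> (forall t, r (-t) = r t) -> Derive r 0 = 0.
Proof.
intros HC He. destruct (C3_d r HC (-0)) as [D1 _].
assert (H : is_derive (fun x => r (-x)) 0 (- Derive r 0)).
{ auto_derive. exists (Derive r (-0)). exact D1. rewrite Ropp_0. change (Derive (fun x => r x) 0) with (Derive r 0). ring. }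
apply is_derive_ext with (g := r) in H; [|intros; apply He].
apply is_derive_unique in H. lra.
Qed.

Lemma s_bound r : C3 r -> Derive r 0 = 0 ->
  exists d K, 0 < d /\ 0 <= K /\ forall t, 0 < t < d -> Rabs (astig r t) <= K * t.
Proof.
intros HC H0.
assert (HD := C3_d r HC).
destruct HC as [_ [_ [_ Hc3]]].
assert (Hc := proj1 (filterlim_locally _ _) (Hc3 0) (mkposreal 1 Rlt_0_1)).
destruct Hc as [e He].
set (M := Rabs (Derive_n r 3 0) + 1).
assert (HM : forall y, Rabs y < e -> Rabs (Derive_n r 3 y) <= M).
{ intros y Hy. assert (Hb : ball 0 e y) by (apply ball_R; rewrite Rminus_0_r; exact Hy).
  specialize (He y Hb). apply ball_R in He. change (Rabs (Derive_n r 3 y - Derive_n r 3 0) < 1) in He. unfold M.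
  assert (H1 := Rabs_triang_inv (Derive_n r 3 y) (Derive_n r 3 0)). lra. }
set (d := Rmin e 1).
assert (Hd : 0 < d) by (unfold d; apply Rmin_glb_lt; [apply cond_pos|lra]).
assert (Hde : d <= e) by apply Rmin_l. assert (Hd1 : d <= 1) by apply Rmin_r.
assert (HMp : 0 <= M) by (unfold M; assert (H := Rabs_pos (Derive_n r 3 0)); lra).
assert (Ha : forall c, 0 <= c < d -> Rabs (Derive_n r 2 c - Derive_n r 2 0) <= M * c).
{ intros c Hc. destruct (Req_dec c 0) as [->|Hc0].
  - rewrite Rminus_diag, Rabs_R0. lra.
  - destruct (MVT_gen (Derive_n r 2) 0 c (Derive_n r 3)) as [x [Hx Heq]].
    + intros x _. exact (proj2 (proj2 (HD x))).
    + intros x _. apply (isd_cont _ _ _ (proj2 (proj2 (HD x)))).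
    + rewrite Rmin_left, Rmax_right in Hx by lra. rewrite Rminus_0_r in Heq. rewrite Heq.
      rewrite Rabs_mult, (Rabs_pos_eq c) by lra. apply Rmult_le_compat_r; [lra|]. apply HM.
      rewrite Rabs_pos_eq; lra. }
assert (Hb : forall t, 0 < t < d -> Rabs (Derive r t - Derive_n r 2 0 * t) <= M * t^2).
{ intros t Ht.
  destruct (MVT_gen (fun u => Derive r u - Derive_n r 2 0 * u) 0 t (fun u => Derive_n r 2 u - Derive_n r 2 0)) as [x [Hx Heq]].
  + intros x _. auto_derive. exists (Derive_n r 2 x); exact (proj1 (proj2 (HD x))).
    change (Derive (fun x0 => Derive r x0) x) with (Derive_n r 2 x).
    change (Derive (fun x0 : R => Derive (fun x1 : R => r x1) x0) 0) with (Derive_n r 2 0). ring.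
  + intros x _. apply continuity_pt_minus. apply (isd_cont _ _ _ (proj1 (proj2 (HD x)))).
    apply continuity_pt_mult. apply continuity_pt_const. intros a b; auto. apply derivable_continuous_pt, derivable_pt_id.
  + rewrite Rmin_left, Rmax_right in Hx by lra. cbv beta in Heq. rewrite H0, Rmult_0_r, !Rminus_0_r in Heq.
    rewrite Heq.
    rewrite Rabs_mult, (Rabs_pos_eq t) by lra.
    assert (Rabs (Derive_n r 2 x - Derive_n r 2 0) <= M * x) by (apply Ha; lra).
    replace (M * t ^ 2) with ((M * t) * t) by ring. apply Rmult_le_compat_r; [lra|].
    assert (M * x <= M * t) by (apply Rmult_le_compat_l; lra). lra. }
set (A := Derive_n r 2 0).
exists d, (2 * Rabs A + 3 * M). split; [exact Hd|]. split.
{ assert (H := Rabs_pos A). lra. }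
intros t Ht.
destruct (trig1 t ltac:(lra)) as [Hs1 [Hs2 [Hc1 Hsc]]].
assert (Hsp : 0 < sin t) by lra.
set (u := (sin t - t * cos t) / sin t).
set (w := cos t / sin t).
assert (Hu : 0 <= u <= 2 * t).
{ unfold u. split. apply Rdiv_le_0_compat; lra.
  apply Rmult_le_reg_r with (sin t); [lra|]. unfold Rdiv. rewrite Rmult_assoc, Rinv_l by lra.
  simpl in Hsc. nra. }
assert (Hw : 0 <= w /\ w * t <= 2).
{ unfold w. split. apply Rdiv_le_0_compat; lra.
  apply Rmult_le_reg_r with (sin t); [lra|]. unfold Rdiv. field_simplify; [|lra]. nra. }
set (e1 := Derive r t - A * t). set (e2 := Derive_n r 2 t - A).
assert (Hs : astig r t = A * u + e2 - e1 * w).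
{ rewrite astig_eq. unfold u, w, e1, e2. field. lra. }
rewrite Hs.
assert (H1 : Rabs (A * u) <= 2 * Rabs A * t).
{ rewrite Rabs_mult, (Rabs_pos_eq u) by lra. assert (H := Rabs_pos A). nra. }
assert (H2 : Rabs e2 <= M * t) by (apply Ha; lra).
assert (H3 : Rabs (e1 * w) <= 2 * M * t).
{ rewrite Rabs_mult, (Rabs_pos_eq w) by lra. assert (Rabs e1 <= M * t^2) by (apply Hb; lra).
  replace (M * t ^ 2) with (M * t * t) in H by ring. assert (HH : Rabs e1 * w <= M * t * t * w) by (apply Rmult_le_compat_r; lra).
  replace (M * t * t * w) with ((M * t) * (w * t)) in HH by ring.
  assert (M * t * (w * t) <= M * t * 2) by (apply Rmult_le_compat_l; [apply Rmult_le_pos|]; lra). lra. }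
assert (H4 := Rabs_triang (A * u + e2) (- (e1 * w))).
assert (H5 := Rabs_triang (A * u) e2). rewrite Rabs_Ropp in H4.
unfold Rminus. lra.
Qed.

Lemma nsc f a b : a <= b -> (forall x, a <= x <= b -> continuity_pt f x) ->
  (forall x, a <= x <= b -> f x <> 0) -> 0 < f a * f b.
Proof.
intros Hab Hc Hn. destruct (Req_dec a b) as [<-|Hne].
{ assert (f a <> 0) by (apply Hn; lra). assert (H1 := Rsqr_pos_lt _ H). unfold Rsqr in H1. lra. }
assert (Ha : f a <> 0) by (apply Hn; lra). assert (Hb : f b <> 0) by (apply Hn; lra).
destruct (Rlt_or_le 0 (f a * f b)) as [H|H]; auto. exfalso.
destruct (Rlt_or_le (f a) 0) as [Ha'|Ha'].
- assert (0 < f b) by (destruct (Rlt_or_le 0 (f b)); [auto| exfalso; nra]).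
  destruct (Ranalysis5.IVT_interv f a b Hc ltac:(lra) Ha' H0) as [z [Hz Hz0]].
  apply (Hn z Hz Hz0).
- assert (f b < 0) by (destruct (Rlt_or_le (f b) 0); [auto| exfalso; assert (0 < f a) by lra; nra]).
  destruct (Ranalysis5.IVT_interv (- f)%F a b) as [z [Hz Hz0]].
  + intros x Hx. apply continuity_pt_opp. auto.
  + lra.
  + unfold opp_fct. lra.
  + unfold opp_fct. lra.
  + unfold opp_fct in Hz0. apply (Hn z Hz). lra.
Qed.

Lemma exd_cont (f : R -> R) x : ex_derive f x -> continuity_pt f x.
Proof. intros [l H]. exact (isd_cont f x l H). Qed.

Lemma s_cont r t : C3 r -> sin t <> 0 -> continuity_pt (astig r) t.
Proof.
intros HC Hs. destruct (C3_d r HC t) as [D1 [D2 D3]]. apply exd_cont.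
apply ex_derive_ext with (f := fun t => Derive_n r 2 t - Derive r t * cos t / sin t).
{ intros; rewrite astig_eq; reflexivity. }
auto_derive. repeat split; auto. exists (Derive_n r 3 t); exact D3. exists (Derive_n r 2 t); exact D2.
Qed.

Lemma sin_pos_small t : 0 < t <= 1 -> 0 < sin t.
Proof. intros Ht. apply sin_gt_0; try lra. assert (H := PI2_1). lra. Qed.

Lemma sign_const r : C3 r -> isolated_umbilic_0 r -> exists eps sg, 0 < eps <= 1 /\ (sg = 1 \/ sg = -1) /\
   forall t, 0 < t < eps -> 0 < sg * astig r t.
Proof.
intros HC [e0 [He0 Hiso]].
set (e := Rmin e0 1). assert (He : 0 < e <= 1) by (unfold e; split; [apply Rmin_glb_lt; lra| apply Rmin_r]).
assert (Hee : e <= e0) by apply Rmin_l.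
set (t0 := e / 2).
assert (Hs0 : astig r t0 <> 0) by (apply Hiso; unfold t0; lra).
exists e, (if Rlt_dec 0 (astig r t0) then 1 else -1). split; auto. split.
{ destruct (Rlt_dec 0 (astig r t0)); auto. }
intros t Ht.
assert (Hp : 0 < astig r (Rmin t t0) * astig r (Rmax t t0)).
{ apply nsc. apply Rle_trans with t; [apply Rmin_l|apply Rmax_l].
  - intros x Hx. apply s_cont; auto. assert (Rmin t t0 > 0) by (apply Rmin_glb_lt; unfold t0; lra).
    assert (Rmax t t0 < e) by (apply Rmax_lub_lt; unfold t0; lra).
    assert (0 < sin x) by (apply sin_pos_small; lra). lra.
  - intros x Hx. apply Hiso. assert (Rmin t t0 > 0) by (apply Rmin_glb_lt; unfold t0; lra).
    assert (Rmax t t0 < e) by (apply Rmax_lub_lt; unfold t0; lra). lra. }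
assert (Hp' : 0 < astig r t * astig r t0).
{ unfold Rmin, Rmax in Hp. destruct (Rle_dec t t0); lra. }
destruct (Rlt_dec 0 (astig r t0)); nra.
Qed.

Lemma cont_eps f x : continuity_pt f x -> forall eps, 0 < eps ->
  exists d, 0 < d /\ forall y, Rabs (y - x) < d -> Rabs (f y - f x) < eps.
Proof.
intros H eps He. destruct (H eps He) as [d [Hd Hy]]. exists d. split; auto.
intros y Hy'. destruct (Req_dec y x) as [->|Hne].
- rewrite Rminus_diag, Rabs_R0. lra.
- apply (Hy y). split. split. exact I. auto. exact Hy'.
Qed.

Lemma r1_lim r : C3 r -> Derive r 0 = 0 -> filterlim (r1 r) (at_right 0) (locally (r2 r 0)).
Proof.
intros HC H0. apply lim_intro. intros eps He.
assert (Hc : continuity_pt (r2 r) 0).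
{ destruct (C3_d r HC 0) as [D1 [D2 D3]]. apply exd_cont. unfold r2. auto_derive. split.
  exists (Derive_n r 3 0); exact D3. split; auto. exists (Derive r 0); exact D1. }
destruct (cont_eps _ _ Hc (eps/2) ltac:(lra)) as [d1 [Hd1 H1]].
destruct (s_bound r HC H0) as [d [K [Hd [HK Hs]]]].
set (del := Rmin d1 (Rmin d (eps / (2 * (K + 1))))).
assert (Hdel : 0 < del). { unfold del. apply Rmin_glb_lt; auto. apply Rmin_glb_lt; auto.
  apply Rdiv_lt_0_compat; lra. }
exists del. split; auto. intros u Hu.
assert (Hu1 : u < d1) by (apply Rlt_le_trans with del; [lra|apply Rmin_l]).
assert (Hu2 : u < d) by (apply Rlt_le_trans with del; [lra|]; unfold del; eapply Rle_trans; [apply Rmin_r|apply Rmin_l]).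
assert (Hu3 : u < eps / (2 * (K + 1))) by (apply Rlt_le_trans with del; [lra|]; unfold del; eapply Rle_trans; [apply Rmin_r|apply Rmin_r]).
assert (A1 : Rabs (r2 r u - r2 r 0) < eps / 2) by (apply H1; rewrite Rminus_0_r, Rabs_pos_eq; lra).
assert (A2 : Rabs (astig r u) <= K * u) by (apply Hs; lra).
assert (A3 : K * u <= eps / 2).
{ assert (K * u <= (K + 1) * u) by nra.
  assert ((K+1) * u < (K+1) * (eps / (2 * (K + 1)))) by (apply Rmult_lt_compat_l; lra).
  replace ((K+1) * (eps / (2 * (K + 1)))) with (eps/2) in H2 by (field; lra). lra. }
replace (r1 r u - r2 r 0) with ((r2 r u - r2 r 0) - astig r u) by (unfold astig; ring).
assert (H4 := Rabs_triang (r2 r u - r2 r 0) (- astig r u)). rewrite Rabs_Ropp in H4. unfold Rminus at 1. lra.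
Qed.

Lemma r10_eq r r10 : C3 r -> Derive r 0 = 0 -> filterlim (r1 r) (at_right 0) (locally r10) -> r10 = r2 r 0.
Proof.
intros HC H0 H. apply (filterlim_locally_unique (F := at_right 0) (r1 r)); auto. apply r1_lim; auto.
Qed.

Lemma lim_ub F l u c : filterlim F (at_right 0) (locally l) -> 0 < u ->
  (forall v, 0 < v < u -> F v <= c) -> l <= c.
Proof.
intros H Hu Hb. destruct (Rle_or_lt l c) as [|Hlt]; auto. exfalso.
destruct (lim_elim F l H (l - c) ltac:(lra)) as [d [Hd Hv]].
set (v := Rmin d u / 2). assert (0 < Rmin d u) by (apply Rmin_glb_lt; auto).
assert (Rmin d u <= d) by apply Rmin_l. assert (Rmin d u <= u) by apply Rmin_r.
specialize (Hv v ltac:(unfold v; lra)). specialize (Hb v ltac:(unfold v; lra)).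
apply Rabs_def2 in Hv. lra.
Qed.

Lemma lim_lb F l u c : filterlim F (at_right 0) (locally l) -> 0 < u ->
  (forall v, 0 < v < u -> c <= F v) -> c <= l.
Proof.
intros H Hu Hb. destruct (Rle_or_lt c l) as [|Hlt]; auto. exfalso.
destruct (lim_elim F l H (c - l) ltac:(lra)) as [d [Hd Hv]].
set (v := Rmin d u / 2). assert (0 < Rmin d u) by (apply Rmin_glb_lt; auto).
assert (Rmin d u <= d) by apply Rmin_l. assert (Rmin d u <= u) by apply Rmin_r.
specialize (Hv v ltac:(unfold v; lra)). specialize (Hb v ltac:(unfold v; lra)).
apply Rabs_def2 in Hv. lra.
Qed.

Lemma isd_affine (f : R -> R) x l a c : is_derive f x l -> is_derive (fun y => a * (f y - c)) x (a * l).
Proof. intros H. auto_derive. exists l; exact H. change (Derive (fun x0 : R => f x0) x) with (Derive f x). rewrite (is_derive_unique f x l H). ring. Qed.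

Lemma cot_pos t : 0 < t <= 1 -> 0 < cos t / sin t.
Proof.
intros Ht. apply Rdiv_lt_0_compat. assert (H := cos_lb1 t ltac:(lra)). nra. apply sin_pos_small; auto.
Qed.

Lemma g_lim r sg : C3 r -> Derive r 0 = 0 -> (sg = 1 \/ sg = -1) ->
  filterlim (fun t => sg * (r1 r t - r2 r 0)) (at_right 0) (locally 0).
Proof.
intros HC H0 Hsg. assert (H := r1_lim r HC H0). apply lim_intro. intros eps He.
destruct (lim_elim _ _ H eps He) as [d [Hd Hu]]. exists d. split; auto. intros u Hu'.
rewrite Rminus_0_r, Rabs_mult. destruct Hsg as [->| ->]; rewrite ?Rabs_R1, ?Rabs_m1, Rmult_1_l; auto.
Qed.

Lemma g_inc r eps sg : C3 r -> 0 < eps <= 1 -> (forall t, 0 < t < eps -> 0 < sg * astig r t) ->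
  forall u t, 0 < u < t -> t < eps -> sg * (r1 r u - r2 r 0) < sg * (r1 r t - r2 r 0).
Proof.
intros HC He Hs u t Hu Ht.
destruct (MVT_gen (fun x => sg * (r1 r x - r2 r 0)) u t (fun x => sg * (astig r x * cos x / sin x))) as [c [Hc Heq]].
- intros x Hx. rewrite Rmin_left, Rmax_right in Hx by lra. apply isd_affine, deriv_r1; auto.
  assert (0 < sin x) by (apply sin_pos_small; lra). lra.
- intros x Hx. rewrite Rmin_left, Rmax_right in Hx by lra. eapply isd_cont. apply isd_affine, deriv_r1; auto.
  assert (0 < sin x) by (apply sin_pos_small; lra). lra.
- rewrite Rmin_left, Rmax_right in Hc by lra. cbv beta in Heq.
  assert (Hc1 : 0 < sg * astig r c) by (apply Hs; lra). assert (Hc2 := cot_pos c ltac:(lra)).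
  assert (0 < sg * (astig r c * cos c / sin c) * (t - u)).
  { apply Rmult_lt_0_compat; [|lra]. replace (sg * (astig r c * cos c / sin c)) with ((sg * astig r c) * (cos c / sin c)) by (unfold Rdiv; ring).
    apply Rmult_lt_0_compat; auto. }
  lra.
Qed.

Lemma g_pos r eps sg : C3 r -> Derive r 0 = 0 -> 0 < eps <= 1 -> (sg = 1 \/ sg = -1) ->
  (forall t, 0 < t < eps -> 0 < sg * astig r t) -> forall t, 0 < t < eps -> 0 < sg * (r1 r t - r2 r 0).
Proof.
intros HC H0 He Hsg Hs t Ht.
assert (H1 := g_inc r eps sg HC He Hs (t/2) t ltac:(lra) ltac:(lra)).
assert (H2 : 0 <= sg * (r1 r (t/2) - r2 r 0)).
{ apply (lim_ub _ 0 (t/2) _ (g_lim r sg HC H0 Hsg)); [lra|].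
  intros v Hv. left. apply (g_inc r eps sg HC He Hs); lra. }
lra.
Qed.

Lemma h_lim r eps sg mu : C3 r -> Derive r 0 = 0 -> 0 < eps <= 1 -> (sg = 1 \/ sg = -1) ->
  (forall t, 0 < t < eps -> 0 < sg * astig r t) -> umbilic_slope_0 r mu ->
  forall e, 0 < e -> exists d, 0 < d /\ d <= eps /\
    forall t, 0 < t < d -> Rabs (astig r t / (r1 r t - r2 r 0) - (mu - 1)) < e.
Proof.
intros HC H0 He Hsg Hs [r10 [Hr1 HQ]] e Hee.
rewrite (r10_eq r r10 HC H0 Hr1) in HQ.
destruct (lim_elim _ _ HQ e Hee) as [d0 [Hd0 Hd]].
exists (Rmin d0 eps). split; [apply Rmin_glb_lt; lra|]. split; [apply Rmin_r|].
intros t Ht. assert (t < d0) by (apply Rlt_le_trans with (Rmin d0 eps); [lra|apply Rmin_l]).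
assert (t < eps) by (apply Rlt_le_trans with (Rmin d0 eps); [lra|apply Rmin_r]).
assert (Hg := g_pos r eps sg HC H0 He Hsg Hs t ltac:(lra)).
assert (Hg0 : r1 r t - r2 r 0 <> 0) by (intro Hz; rewrite Hz in Hg; lra).
specialize (Hd t ltac:(lra)).
replace (astig r t / (r1 r t - r2 r 0) - (mu - 1)) with ((r2 r t - r2 r 0) / (r1 r t - r2 r 0) - mu).
exact Hd. unfold astig. field. exact Hg0.
Qed.

Lemma exp_le x y : x <= y -> exp x <= exp y.
Proof. intros [H| ->]; [left; apply exp_increasing; auto| lra]. Qed.

Lemma cmp_gen G dG b d (up : bool) : 0 < d <= 1 -> (forall t, 0 < t < d -> 0 < G t) ->
  (forall t, 0 < t < d -> is_derive G t (dG t)) ->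
  (forall t, 0 < t < d -> if up then b * (cos t / sin t) * G t <= dG t else dG t <= b * (cos t / sin t) * G t) ->
  exists C, 0 < C /\ forall u, 0 < u < d / 2 ->
    if up then G u <= C * Rpower (sin u) b else C * Rpower (sin u) b <= G u.
Proof.
intros Hd HG HdG Hcmp.
set (F := fun x => ln (G x) - b * ln (sin x)).
set (dF := fun x => dG x / G x - b * (cos x / sin x)).
set (t0 := d / 2).
assert (HF : forall x, 0 < x < d -> is_derive F x (dF x)).
{ intros x Hx. unfold F, dF. assert (0 < sin x) by (apply sin_pos_small; lra).
  assert (HGx := HG x Hx). auto_derive. repeat split; auto. exists (dG x); apply HdG; auto.
  change (Derive (fun x0 : R => G x0) x) with (Derive G x). rewrite (is_derive_unique G x (dG x) (HdG x Hx)).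
  field. lra. }
exists (exp (F t0)). split; [apply exp_pos|]. intros u Hu.
destruct (MVT_gen F u t0 dF) as [c [Hc Heq]].
- intros x Hx. rewrite Rmin_left, Rmax_right in Hx by (unfold t0 in *; lra). apply HF. unfold t0 in *; lra.
- intros x Hx. rewrite Rmin_left, Rmax_right in Hx by (unfold t0 in *; lra). eapply isd_cont. apply HF. unfold t0 in *; lra.
- rewrite Rmin_left, Rmax_right in Hc by (unfold t0 in *; lra).
  assert (Hc0 : 0 < c < d) by (unfold t0 in *; lra).
  assert (HGc := HG c Hc0). assert (Hsu : 0 < sin u) by (apply sin_pos_small; lra).
  assert (HGu : 0 < G u) by (apply HG; lra).
  assert (Hrp : Rpower (sin u) b = exp (b * ln (sin u))) by reflexivity.
  assert (HGe : G u = exp (F u + b * ln (sin u))) by (unfold F; rewrite <- (exp_ln (G u)) at 1 by auto; f_equal; ring).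
  rewrite HGe, Hrp, <- exp_plus.
  specialize (Hcmp c Hc0). assert (Hsc : 0 < sin c) by (apply sin_pos_small; lra). destruct up.
  + assert (0 <= dF c). { unfold dF. apply Rmult_le_reg_r with (G c); auto. rewrite Rmult_0_l.
      replace ((dG c / G c - b * (cos c / sin c)) * G c) with (dG c - b * (cos c / sin c) * G c) by (field; repeat split; lra). lra. }
    apply exp_le. assert (0 <= dF c * (t0 - u)) by (apply Rmult_le_pos; lra). lra.
  + assert (dF c <= 0). { unfold dF. apply Rmult_le_reg_r with (G c); auto. rewrite Rmult_0_l.
      replace ((dG c / G c - b * (cos c / sin c)) * G c) with (dG c - b * (cos c / sin c) * G c) by (field; repeat split; lra). lra. }
    apply exp_le. assert (dF c * (t0 - u) <= 0). { replace (dF c * (t0 - u)) with (- ((- dF c) * (t0 - u))) by ring.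
      assert (0 <= (- dF c) * (t0 - u)) by (apply Rmult_le_pos; lra). lra. } lra.
Qed.

Lemma rp_small a eps : 0 < a -> 0 < eps -> exists d, 0 < d /\ forall u, 0 < u < d -> Rpower (sin u) a < eps.
Proof.
intros Ha He. exists (Rmin 1 (exp (ln eps / a))). split. apply Rmin_glb_lt; [lra|apply exp_pos].
intros u Hu. assert (u <= 1) by (assert (Rmin 1 (exp (ln eps / a)) <= 1) by apply Rmin_l; lra).
assert (u < exp (ln eps / a)) by (assert (Rmin 1 (exp (ln eps / a)) <= exp (ln eps / a)) by apply Rmin_r; lra).
assert (Hs := sin_pos_small u ltac:(lra)). assert (Hsu : sin u < u) by (apply sin_lt_x; lra).
assert (ln (sin u) < ln eps / a). { rewrite <- (ln_exp (ln eps / a)). apply ln_increasing; lra. }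
unfold Rpower. rewrite <- (exp_ln eps) by auto. apply exp_increasing.
apply Rmult_lt_reg_r with (/ a). apply Rinv_0_lt_compat; auto.
replace (a * ln (sin u) * / a) with (ln (sin u)) by (field; lra). exact H1.
Qed.

Lemma rp_pos x a : 0 < Rpower x a.
Proof. apply exp_pos. Qed.

Lemma rp_split x a b : Rpower x a = Rpower x (a - b) * Rpower x b.
Proof. rewrite <- Rpower_plus. f_equal. ring. Qed.

Section Core.

Lemma core_setup r : C3 r -> (forall t, r (-t) = r t) -> isolated_umbilic_0 r ->
  exists eps sg, 0 < eps <= 1 /\ (sg = 1 \/ sg = -1) /\ Derive r 0 = 0 /\
   (forall t, 0 < t < eps -> 0 < sg * astig r t) /\
   (forall t, 0 < t < eps -> 0 < sg * (r1 r t - r2 r 0)) /\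
   (forall t, 0 < t < eps -> is_derive (fun x => sg * (r1 r x - r2 r 0)) t (sg * (astig r t * cos t / sin t))).
Proof.
intros HC Hev Hiso. assert (H0 := even_d0 r HC Hev).
destruct (sign_const r HC Hiso) as [eps [sg [He [Hsg Hs]]]].
exists eps, sg. split; [exact He|]. split; [exact Hsg|]. split; [exact H0|]. split; [exact Hs|]. split.
- apply (g_pos r eps sg); auto.
- intros t Ht. apply isd_affine, deriv_r1; auto. assert (0 < sin t) by (apply sin_pos_small; lra). lra.
Qed.

End Core.

Lemma dG_rel r sg t : (sg = 1 \/ sg = -1) -> 0 < t <= 1 -> r1 r t - r2 r 0 <> 0 ->
  sg * (astig r t * cos t / sin t) = (astig r t / (r1 r t - r2 r 0)) * (cos t / sin t) * (sg * (r1 r t - r2 r 0)).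
Proof. intros Hsg Ht Hg. assert (0 < sin t) by (apply sin_pos_small; lra). field. split; lra. Qed.

Lemma cot_bound c : 0 < c <= 1 -> cos c / sin c * c <= 2.
Proof.
intros Hc. destruct (trig1 c Hc) as [H1 [H2 [H3 _]]].
apply Rmult_le_reg_r with (sin c); [lra|]. unfold Rdiv. 
replace (cos c * / sin c * c * sin c) with (cos c * c) by (field; lra). nra.
Qed.

Lemma m_ge1 r mu : C3 r -> (forall t, r (-t) = r t) -> isolated_umbilic_0 r -> umbilic_slope_0 r mu -> 1 <= mu - 1.
Proof.
intros HC Hev Hiso Hmu.
destruct (core_setup r HC Hev Hiso) as [eps [sg [He [Hsg [H0 [Hs [HG HdG]]]]]]].
destruct (Rle_or_lt 1 (mu - 1)) as [|Hm]; auto. exfalso.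
set (m := mu - 1) in *. set (b := (m + 1) / 2).
destruct (h_lim r eps sg mu HC H0 He Hsg Hs Hmu ((1 - m) / 2) ltac:(lra)) as [dh [Hdh [Hdhe Hh]]].
set (G := fun x => sg * (r1 r x - r2 r 0)) in *.
set (dG := fun x => sg * (astig r x * cos x / sin x)) in *.
destruct (cmp_gen G dG b dh false) as [C [HC0 HCb]].
- lra.
- intros t Ht. apply HG. lra.
- intros t Ht. apply HdG. lra.
- intros t Ht. assert (Hgt := HG t ltac:(lra)). unfold dG, G in *.
  assert (Hg0 : r1 r t - r2 r 0 <> 0) by (intro Hz; rewrite Hz in Hgt; lra).
  rewrite (dG_rel r sg t Hsg ltac:(lra) Hg0).
  assert (Hht := Hh t Ht). apply Rabs_def2 in Hht.
  assert (Hcot := cot_pos t ltac:(lra)).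
  apply Rmult_le_compat_r; [lra|]. apply Rmult_le_compat_r; unfold b, m in *; lra.
- destruct (s_bound r HC H0) as [ds [K [Hds [HK Hsb]]]].
  set (d2 := Rmin (dh / 2) ds).
  assert (Hd2 : 0 < d2) by (unfold d2; apply Rmin_glb_lt; lra).
  assert (Hd2a : d2 <= dh / 2) by apply Rmin_l. assert (Hd2b : d2 <= ds) by apply Rmin_r.
  assert (Hup : forall u, 0 < u < d2 -> G u <= 2 * K * u).
  { intros u Hu.
    assert (HL : G u - 2 * K * u <= 0).
    { apply (lim_lb G 0 u); [apply g_lim; auto|lra|].
      intros v Hv.
      destruct (MVT_gen G v u dG) as [c [Hc Heq]].
      + intros x Hx. rewrite Rmin_left, Rmax_right in Hx by lra. apply HdG. lra.
      + intros x Hx. rewrite Rmin_left, Rmax_right in Hx by lra. eapply isd_cont. apply HdG. lra.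
      + rewrite Rmin_left, Rmax_right in Hc by lra.
        assert (Hc0 : 0 < c <= 1) by lra.
        assert (Hsc := Hsb c ltac:(lra)).
        assert (Hcb := cot_bound c Hc0). assert (Hcp := cot_pos c Hc0).
        assert (HdGc : dG c <= 2 * K).
        { unfold dG. replace (sg * (astig r c * cos c / sin c)) with ((sg * astig r c) * (cos c / sin c)) by (unfold Rdiv; ring).
          assert (sg * astig r c <= K * c).
          { apply Rle_trans with (Rabs (sg * astig r c)). apply Rle_abs. rewrite Rabs_mult.
            destruct Hsg as [-> | ->]; rewrite ?Rabs_R1, ?Rabs_m1; lra. }
          apply Rle_trans with (K * c * (cos c / sin c)). apply Rmult_le_compat_r; lra.
          replace (K * c * (cos c / sin c)) with (K * (cos c / sin c * c)) by ring.
          replace (2 * K) with (K * 2) by ring. apply Rmult_le_compat_l; lra. }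
        assert (dG c * (u - v) <= 2 * K * (u - v)) by (apply Rmult_le_compat_r; lra).
        assert (2 * K * (u - v) <= 2 * K * u) by nra.
        lra. }
    lra. }
  destruct (rp_small (1 - b) (C / (4 * K + 1)) ltac:(unfold b; lra) ltac:(apply Rdiv_lt_0_compat; lra)) as [dr [Hdr Hr]].
  set (u := Rmin d2 dr / 2).
  assert (Hu0 : 0 < Rmin d2 dr) by (apply Rmin_glb_lt; lra).
  assert (Hu1 : Rmin d2 dr <= d2) by apply Rmin_l. assert (Hu2 : Rmin d2 dr <= dr) by apply Rmin_r.
  assert (Hua : 0 < u < d2) by (unfold u; lra). assert (Hub : 0 < u < dr) by (unfold u; lra).
  specialize (Hup u Hua). specialize (Hr u Hub). specialize (HCb u ltac:(lra)).
  destruct (trig1 u ltac:(lra)) as [Hs1 _].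
  assert (Hsu : 0 < sin u) by lra.
  assert (Hsp : sin u = Rpower (sin u) (1 - b) * Rpower (sin u) b).
  { rewrite <- rp_split, Rpower_1; auto. }
  set (S := Rpower (sin u) (1 - b)) in *. set (P := Rpower (sin u) b) in *.
  assert (HP : 0 < P) by apply rp_pos. assert (HS : 0 < S) by apply rp_pos.
  assert (C * P <= 4 * K * S * P) by (rewrite Hsp in Hs1; nra).
  assert (C <= 4 * K * S) by (apply Rmult_le_reg_r with P; auto; lra).
  assert (4 * K * S <= 4 * K * (C / (4 * K + 1))) by (apply Rmult_le_compat_l; lra).
  assert (4 * K * (C / (4 * K + 1)) < C).
  { apply Rmult_lt_reg_r with (4 * K + 1); [lra|]. replace (4 * K * (C / (4 * K + 1)) * (4 * K + 1)) with (4 * K * C) by (field; lra). nra. }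
  lra.
Qed.

Lemma core0 r alpha : C3 r -> (forall t, r (-t) = r t) -> isolated_umbilic_0 r ->
  forall mu0 : R, umbilic_slope_0 r mu0 ->
     (alpha + 1 < mu0 ->
        filterlim (fun t => astig r t / Rpower (sin t) alpha)
          (at_right 0) (locally 0)) /\
     (mu0 < alpha + 1 ->
        filterlim (fun t => astig r t / Rpower (sin t) alpha)
          (at_right 0) (Rbar_locally p_infty) \/
        filterlim (fun t => astig r t / Rpower (sin t) alpha)
          (at_right 0) (Rbar_locally m_infty)).
Proof.
intros HC Hev Hiso mu Hmu.
destruct (core_setup r HC Hev Hiso) as [eps [sg [He [Hsg [H0 [Hs [HG HdG]]]]]]].
set (G := fun x => sg * (r1 r x - r2 r 0)) in *.
set (dG := fun x => sg * (astig r x * cos x / sin x)) in *.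
assert (Hg0 : forall t, 0 < t < eps -> r1 r t - r2 r 0 <> 0).
{ intros t Ht Hz. specialize (HG t Ht). unfold G in HG. rewrite Hz in HG. lra. }
assert (HabsG : forall t, 0 < t < eps -> Rabs (r1 r t - r2 r 0) = G t).
{ intros t Ht. rewrite <- (Rabs_pos_eq (G t)) by (left; apply HG; auto). unfold G. rewrite Rabs_mult.
  destruct Hsg as [-> | ->]; rewrite ?Rabs_R1, ?Rabs_m1; ring. }
split.
- intros Hlt. set (m := mu - 1). set (b := (alpha + m) / 2). set (e := (m - alpha) / 2).
  destruct (h_lim r eps sg mu HC H0 He Hsg Hs Hmu e ltac:(unfold e, m; lra)) as [dh [Hdh [Hdhe Hh]]].
  destruct (cmp_gen G dG b dh true) as [C [HC0 HCb]].
  + lra.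
  + intros t Ht. apply HG. lra.
  + intros t Ht. apply HdG. lra.
  + intros t Ht. assert (Hgt := HG t ltac:(lra)). unfold dG, G in *.
    rewrite (dG_rel r sg t Hsg ltac:(lra) (Hg0 t ltac:(lra))).
    assert (Hht := Hh t Ht). apply Rabs_def2 in Hht.
    assert (Hcot := cot_pos t ltac:(lra)).
    apply Rmult_le_compat_r; [lra|]. apply Rmult_le_compat_r; unfold b, e, m in *; lra.
  + apply lim_intro. intros ep Hep.
    set (H := Rabs m + e).
    assert (HH : 0 < H) by (unfold H, e, m; assert (Hab := Rabs_pos (mu - 1)); lra).
    destruct (rp_small (b - alpha) (ep / (H * C + 1)) ltac:(unfold b, m; lra)) as [dr [Hdr Hr]].
    { apply Rdiv_lt_0_compat; [lra|]. assert (0 < H * C) by (apply Rmult_lt_0_compat; lra). lra. }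
    exists (Rmin (dh / 2) dr). split; [apply Rmin_glb_lt; lra|].
    intros u Hu. assert (Hu1 : u < dh / 2) by (eapply Rlt_le_trans; [apply Hu|apply Rmin_l]).
    assert (Hu2 : u < dr) by (eapply Rlt_le_trans; [apply Hu|apply Rmin_r]).
    specialize (HCb u ltac:(lra)). specialize (Hr u ltac:(lra)).
    assert (Hhu := Hh u ltac:(lra)).
    assert (Hhb : Rabs (astig r u / (r1 r u - r2 r 0)) <= H).
    { unfold H. replace (astig r u / (r1 r u - r2 r 0)) with ((astig r u / (r1 r u - r2 r 0) - (mu - 1)) + m) by (unfold m; ring).
      eapply Rle_trans. apply Rabs_triang. unfold m in *. lra. }
    assert (Hast : astig r u = (astig r u / (r1 r u - r2 r 0)) * (r1 r u - r2 r 0)) by (field; apply Hg0; lra).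
    assert (HA : Rabs (astig r u) <= H * (C * Rpower (sin u) b)).
    { rewrite Hast, Rabs_mult, HabsG by lra. apply Rmult_le_compat; auto using Rabs_pos; try lra.
      left; apply HG; lra. }
    rewrite (rp_split (sin u) b alpha) in HA.
    set (S := Rpower (sin u) (b - alpha)) in *. set (Pa := Rpower (sin u) alpha) in *.
    assert (HPa : 0 < Pa) by apply rp_pos. assert (HS : 0 < S) by apply rp_pos.
    rewrite Rminus_0_r. unfold Rdiv. rewrite Rabs_mult, (Rabs_pos_eq (/ Pa)) by (left; apply Rinv_0_lt_compat; auto).
    apply Rmult_le_compat_r with (r := / Pa) in HA; [|left; apply Rinv_0_lt_compat; auto].
    replace (H * (C * (S * Pa)) * / Pa) with (H * C * S) in HA by (field; lra).
    assert (H * C * S <= H * C * (ep / (H * C + 1))) by (apply Rmult_le_compat_l; [apply Rmult_le_pos|]; lra).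
    assert (H * C * (ep / (H * C + 1)) < ep).
    { apply Rmult_lt_reg_r with (H * C + 1). assert (0 < H * C) by (apply Rmult_lt_0_compat; lra). lra.
      replace (H * C * (ep / (H * C + 1)) * (H * C + 1)) with (H * C * ep) by (field; assert (0 < H * C) by (apply Rmult_lt_0_compat; lra); lra).
      nra. }
    lra.
- intros Hlt. assert (Hm1 := m_ge1 r mu HC Hev Hiso Hmu).
  set (m := mu - 1) in *. set (b := (m + alpha) / 2). set (e := Rmin ((alpha - m) / 2) (m / 2)).
  assert (He1 : e <= (alpha - m) / 2) by apply Rmin_l. assert (He2 : e <= m / 2) by apply Rmin_r.
  assert (He0 : 0 < e) by (unfold e, m in *; apply Rmin_glb_lt; lra).
  destruct (h_lim r eps sg mu HC H0 He Hsg Hs Hmu e He0) as [dh [Hdh [Hdhe Hh]]].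
  destruct (cmp_gen G dG b dh false) as [C [HC0 HCb]].
  + lra.
  + intros t Ht. apply HG. lra.
  + intros t Ht. apply HdG. lra.
  + intros t Ht. assert (Hgt := HG t ltac:(lra)). unfold dG, G in *.
    rewrite (dG_rel r sg t Hsg ltac:(lra) (Hg0 t ltac:(lra))).
    assert (Hht := Hh t Ht). apply Rabs_def2 in Hht.
    assert (Hcot := cot_pos t ltac:(lra)).
    apply Rmult_le_compat_r; [lra|]. apply Rmult_le_compat_r; unfold b, m in *; lra.
  + assert (Key : forall M, exists d, 0 < d /\ forall u, 0 < u < d ->
        Rabs M + 1 < sg * (astig r u / Rpower (sin u) alpha)).
    { intros M. set (K := m / 2 * C).
      assert (HK : 0 < K) by (unfold K; apply Rmult_lt_0_compat; lra).
      destruct (rp_small (alpha - b) (K / (Rabs M + 1)) ltac:(unfold b; lra)) as [dr [Hdr Hr]].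
      { apply Rdiv_lt_0_compat; auto. assert (Hab := Rabs_pos M). lra. }
      exists (Rmin (dh / 2) dr). split; [apply Rmin_glb_lt; lra|].
      intros u Hu. assert (Hu1 : u < dh / 2) by (eapply Rlt_le_trans; [apply Hu|apply Rmin_l]).
      assert (Hu2 : u < dr) by (eapply Rlt_le_trans; [apply Hu|apply Rmin_r]).
      specialize (HCb u ltac:(lra)). specialize (Hr u ltac:(lra)).
      assert (Hhu := Hh u ltac:(lra)). apply Rabs_def2 in Hhu.
      assert (HGu : 0 < G u) by (apply HG; lra).
      assert (Hq : sg * (astig r u / Rpower (sin u) alpha) = (astig r u / (r1 r u - r2 r 0)) * G u / Rpower (sin u) alpha).
      { unfold G. field. split. apply Hg0; lra. apply Rgt_not_eq, rp_pos. }
      rewrite Hq. rewrite (rp_split (sin u) alpha b).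
      set (S := Rpower (sin u) (alpha - b)) in *. set (Pb := Rpower (sin u) b) in *.
      assert (HPb : 0 < Pb) by apply rp_pos. assert (HS : 0 < S) by apply rp_pos.
      set (h := astig r u / (r1 r u - r2 r 0)) in *.
      assert (Hh2 : m / 2 <= h) by (unfold m in *; lra).
      assert (K * Pb <= h * G u).
      { unfold K. rewrite Rmult_assoc. apply Rmult_le_compat; try lra. apply Rmult_le_pos; lra. }
      assert (Hab := Rabs_pos M).
      assert ((Rabs M + 1) * S < K).
      { apply Rmult_lt_compat_l with (r := Rabs M + 1) in Hr; [|lra].
        replace ((Rabs M + 1) * (K / (Rabs M + 1))) with K in Hr by (field; lra). lra. }
      apply Rmult_lt_reg_r with (S * Pb). apply Rmult_lt_0_compat; auto.
      replace (h * G u / (S * Pb) * (S * Pb)) with (h * G u) by (field; split; lra).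
      replace ((Rabs M + 1) * (S * Pb)) with (((Rabs M + 1) * S) * Pb) by ring.
      apply Rlt_le_trans with (K * Pb); [apply Rmult_lt_compat_r; auto|lra]. }
    destruct Hsg as [Hs1 | Hs1].
    * left. apply pinf_intro. intros M. destruct (Key M) as [d [Hd Hk]]. exists d. split; auto.
      intros u Hu. specialize (Hk u Hu). rewrite Hs1 in Hk. assert (H1 := Rle_abs M). lra.
    * right. apply minf_intro. intros M. destruct (Key M) as [d [Hd Hk]]. exists d. split; auto.
      intros u Hu. specialize (Hk u Hu). rewrite Hs1 in Hk. assert (H1 := Rle_abs (- M)). rewrite Rabs_Ropp in H1. lra.
Qed.

Lemma exn_all r : C3 r -> forall y k, (k <= 3)%nat -> ex_derive_n r k y.
Proof.
intros [H1 [H2 [H3 _]]] y k Hk. destruct k as [|[|[|[|k]]]]; simpl; auto.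
- exact (H1 y). - exact (H2 y). - exact (H3 y). - exfalso; lia.
Qed.

Definition refl (r : R -> R) := fun t => r (- t + PI).

Lemma refl_Dn r n x : C3 r -> (n <= 3)%nat -> Derive_n (refl r) n x = (-1) ^ n * Derive_n r n (- x + PI).
Proof.
intros HC Hn. unfold refl.
rewrite (Derive_n_comp_opp (fun y => r (y + PI)) n x).
- rewrite Derive_n_comp_trans. reflexivity.
- apply filter_forall. intros y k Hk. apply ex_derive_n_comp_trans. apply exn_all; auto. lia.
Qed.

Lemma refl_exn r n x : C3 r -> (n <= 3)%nat -> ex_derive_n (refl r) n x.
Proof.
intros HC Hn. unfold refl.
apply (ex_derive_n_comp_opp (fun y => r (y + PI)) n x).
apply filter_forall. intros y k Hk. apply ex_derive_n_comp_trans. apply exn_all; auto. lia.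
Qed.

Lemma refl_C3 r : C3 r -> C3 (refl r).
Proof.
intros HC. split; [|split; [|split]]; intros t.
- apply refl_exn; auto.
- apply refl_exn; auto.
- apply refl_exn; auto.
- apply continuous_ext with (f := fun y => - (Derive_n r 3 (- y + PI))).
  { intros y. rewrite refl_Dn; auto. simpl. ring. }
  apply continuity_pt_filterlim.
  change (continuity_pt (comp (fun z => - Derive_n r 3 z) (fun y => - y + PI)) t).
  apply continuity_pt_comp.
  + reg.
  + change (continuity_pt (opp_fct (Derive_n r 3)) (-t+PI)). apply continuity_pt_opp.
    apply continuity_pt_filterlim. destruct HC as [_ [_ [_ H4]]]. apply H4.
Qed.

Lemma refl_even r : (forall t, r (- t) = r t) -> (forall t, r (t + 2 * PI) = r t) -> forall t, refl r (- t) = refl r t.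
Proof.
intros He Hp t. unfold refl. replace (- - t + PI) with ((t - PI) + 2 * PI) by ring. rewrite Hp.
replace (t - PI) with (- (- t + PI)) by ring. apply He.
Qed.

Lemma refl_D1 r x : C3 r -> Derive (refl r) x = - Derive r (- x + PI).
Proof. intros HC. change (Derive (refl r) x) with (Derive_n (refl r) 1 x). rewrite refl_Dn; auto. change (Derive_n r 1 (- x + PI)) with (Derive r (- x + PI)). ring. Qed.

Lemma refl_D2 r x : C3 r -> Derive_n (refl r) 2 x = Derive_n r 2 (- x + PI).
Proof. intros HC. rewrite refl_Dn; auto. ring. Qed.

Lemma refl_r1 r t : C3 r -> r1 (refl r) t = r1 r (PI - t).
Proof.
intros HC. unfold r1. rewrite refl_D1 by auto. unfold refl.
replace (- t + PI) with (PI - t) by ring.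
rewrite <- (sin_PI_x t) at 1. replace t with (PI - (PI - t)) at 3 by ring. rewrite Rtrigo_facts.cos_pi_minus.
replace (PI - (PI - t)) with t by ring. unfold Rdiv. ring.
Qed.

Lemma refl_r2 r t : C3 r -> r2 (refl r) t = r2 r (PI - t).
Proof. intros HC. unfold r2. rewrite refl_D2 by auto. unfold refl. replace (- t + PI) with (PI - t) by ring. reflexivity. Qed.

Lemma refl_astig r t : C3 r -> astig (refl r) t = astig r (PI - t).
Proof. intros HC. unfold astig. rewrite refl_r1, refl_r2 by auto. reflexivity. Qed.

Lemma fl_right_left : filterlim (fun t => PI - t) (at_right 0) (at_left PI).
Proof.
intros P [e He]. exists e. intros y Hy Hy0. apply He.
- apply ball_R. apply ball_R in Hy. replace (PI - y - PI) with (- (y - 0)) by ring. rewrite Rabs_Ropp. exact Hy.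
- lra.
Qed.

Lemma fl_left_right : filterlim (fun t => PI - t) (at_left PI) (at_right 0).
Proof.
intros P [e He]. exists e. intros y Hy Hy0. apply He.
- apply ball_R. apply ball_R in Hy. replace (PI - y - 0) with (- (y - PI)) by ring. rewrite Rabs_Ropp. exact Hy.
- lra.
Qed.

Lemma transfer r alpha (G : (R -> Prop) -> Prop) : C3 r ->
  filterlim (fun t => astig (refl r) t / Rpower (sin t) alpha) (at_right 0) G ->
  filterlim (fun t => astig r t / Rpower (sin t) alpha) (at_left PI) G.
Proof.
intros HC H.
apply filterlim_ext with (f := fun t => (fun u => astig (refl r) u / Rpower (sin u) alpha) (PI - t)).
{ intros t. cbv beta. rewrite refl_astig by auto. replace (PI - (PI - t)) with t by ring. rewrite sin_PI_x. reflexivity. }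
exact (filterlim_comp R R _ (fun t => PI - t) (fun u => astig (refl r) u / Rpower (sin u) alpha) (at_left PI) (at_right 0) G fl_left_right H).
Qed.

Theorem proposition2p2 (r : R -> R) (alpha : R) :
  support_fun_W_C3 r ->
  (isolated_umbilic_0 r -> forall mu0 : R, umbilic_slope_0 r mu0 ->
     (alpha + 1 < mu0 ->
        filterlim (fun t => astig r t / Rpower (sin t) alpha)
          (at_right 0) (locally 0)) /\
     (mu0 < alpha + 1 ->
        filterlim (fun t => astig r t / Rpower (sin t) alpha)
          (at_right 0) (Rbar_locally p_infty) \/
        filterlim (fun t => astig r t / Rpower (sin t) alpha)
          (at_right 0) (Rbar_locally m_infty))) /\
  (isolated_umbilic_pi r -> forall mupi : R, umbilic_slope_pi r mupi ->
     (alpha + 1 < mupi ->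
        filterlim (fun t => astig r t / Rpower (sin t) alpha)
          (at_left PI) (locally 0)) /\
     (mupi < alpha + 1 ->
        filterlim (fun t => astig r t / Rpower (sin t) alpha)
          (at_left PI) (Rbar_locally p_infty) \/
        filterlim (fun t => astig r t / Rpower (sin t) alpha)
          (at_left PI) (Rbar_locally m_infty))).
Proof.
intros [HC [Hev [Hper _]]]. split.
- intros Hiso mu Hmu. apply core0; auto.
- intros Hiso mu Hmu.
  assert (HCq := refl_C3 r HC). assert (Hevq := refl_even r Hev Hper).
  assert (Hisoq : isolated_umbilic_0 (refl r)).
  { destruct Hiso as [e [He H]]. exists e. split; auto. intros t Ht. rewrite refl_astig by auto. apply H. lra. }
  assert (Hmuq : umbilic_slope_0 (refl r) mu).
  { destruct Hmu as [r1pi [H1 H2]]. exists r1pi. split.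
    - apply filterlim_ext with (f := fun t => r1 r (PI - t)).
      { intros t. symmetry. apply refl_r1; auto. }
      exact (filterlim_comp R R _ (fun t => PI - t) (r1 r) (at_right 0) (at_left PI) _ fl_right_left H1).
    - apply filterlim_ext with (f := fun t => (fun u => (r2 r u - r2 r PI) / (r1 r u - r1pi)) (PI - t)).
      { intros t. cbv beta. rewrite refl_r2, refl_r1, refl_r2 by auto. rewrite Rminus_0_r. reflexivity. }
      exact (filterlim_comp R R _ (fun t => PI - t) (fun u => (r2 r u - r2 r PI) / (r1 r u - r1pi)) (at_right 0) (at_left PI) _ fl_right_left H2). }
  destruct (core0 (refl r) alpha HCq Hevq Hisoq mu Hmuq) as [A B]. split.
  + intros Hlt. apply transfer; auto.
  + intros Hlt. destruct (B Hlt) as [B1|B1]; [left|right]; apply transfer; auto.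
Qed.
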